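(* Let $X\neq\emptyset$ be countable, $F=(F_x)_{x\in X}$ a family of finite-dimensional complex vector spaces, and $A\colon\Gamma(X;F)\to\Gamma(X;F)$ a continuous linear operator whose dual operator $A'\colon\Gamma_c(X;F')\to\Gamma_c(X;F')$ is injective. Then for every finite nonempty $K\subseteq X$ there exist $\varepsilon>0$ and a finite nonempty $K'\subseteq X$ such that $\overline{A(U_K)}\supseteq\varepsilon U_{K'}$, where the closure is taken in $\Gamma(X;F)$.
   Context: $\Gamma(X;F)=\prod_x F_x$ carries the product topology, i.e. the topology generated by seminorms $p_K(f)=\sum_{x\in K}\|f(x)\|_x$ for finite $K\subseteq X$, with $\|\cdot\|_x$ a fixed norm on $F_x$. $U_K:=\{f\in\Gamma(X;F)\mid p_K(f)\le1\}$. $\Gamma_c(X;F')$ is the space of finitely supported sections of the dual bundle $F'=(F'_x)$, identified with the continuous dual of $\Gamma(X;F)$ via $(\varphi,f)=\sum_x\varphi(x)(f(x))$; the dual operator is defined by $(A'\varphi,f)=(\varphi,Af)$. *)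

(* Defs.v *)
From HB Require Import structures.
From mathcomp Require Import all_boot all_order all_algebra.
From mathcomp Require Import finmap.
From mathcomp Require Import boolp classical_sets fsbigop reals.
From mathcomp Require Import complex.
Set Implicit Arguments. Unset Strict Implicit. Unset Printing Implicit Defensive.
Import Order.TTheory GRing.Theory Num.Theory.
Local Open Scope ring_scope.
Local Open Scope classical_set_scope.

Section Sections.
Variables (R : realType) (X : countType) (n : X -> nat).

(* Γ(X;F) with F_x = C^(n x) (every fin.-dim complex space is of this form). *)
Definition sec := forall x : X, 'rV[R[i]]_(n x).

Definition sec_add (f g : sec) : sec := fun x => f x + g x.
Definition sec_sub (f g : sec) : sec := fun x => f x - g x.
Definition sec_scale (a : R[i]) (f : sec) : sec := fun x => a *: f x.

Definition sec_linear (A : sec -> sec) : Prop :=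
  forall (a : R[i]) (f g : sec), A (sec_add (sec_scale a f) g) = sec_add (sec_scale a (A f)) (A g).

Definition is_norm (m : nat) (N : 'rV[R[i]]_m -> R) : Prop :=
  [/\ forall v w, N (v + w) <= N v + N w,
      forall (a : R[i]) v, N (a *: v) = Normc.normc a * N v
    & forall v, N v = 0 -> v = 0].

Variable nrm : forall x : X, 'rV[R[i]]_(n x) -> R.

Definition pK (K : {fset X}) (f : sec) : R := \sum_(x <- K) nrm (f x).

Definition U (K : {fset X}) : set sec := [set f | pK K f <= 1].

Definition sec_open (O : set sec) : Prop :=
  forall f, O f -> exists (K : {fset X}) (d : R), 0 < d /\
    (forall g, pK K (sec_sub g f) < d -> O g).

Definition sec_closure (S : set sec) : set sec :=
  [set g | forall O, sec_open O -> O g -> exists h, S h /\ O h].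

Definition sec_continuous (A : sec -> sec) : Prop :=
  forall O, sec_open O -> sec_open (A @^-1` O).

Definition sec_rscale (eps : R) (S : set sec) : set sec :=
  [set g | exists2 f, S f & g = sec_scale (real_complex R eps) f].

(* Γ_c(X;F'): finitely supported sections of the dual bundle; the dual
   F'_x of C^(n x) is identified with C^(n x) via v |-> (w |-> Σ_i v_i w_i). *)
Definition dual_pair (m : nat) (phi v : 'rV[R[i]]_m) : R[i] :=
  \sum_(i < m) phi 0 i * v 0 i.

Definition Gc : set sec :=
  [set phi | exists K : {fset X}, forall x, x \notin K -> phi x = 0].

Definition pairing (phi f : sec) : R[i] :=
  (\sum_(x \in [set: X]) dual_pair (phi x) (f x))%R.

End Sections.

(* Main.v *)
Require Import Defs.
From HB Require Import structures.
From mathcomp Require Import all_boot all_order all_algebra.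
From mathcomp Require Import finmap.
From mathcomp Require Import boolp classical_sets fsbigop reals.
From mathcomp Require Import complex.
From mathcomp Require Import topology normedtype derive.
From mathcomp Require Import lra.
Import Order.TTheory GRing.Theory Num.Theory.
Import numFieldTopology.Exports numFieldNormedType.Exports.
Local Open Scope ring_scope.
Local Open Scope classical_set_scope.

Section Hard.
Variables (R : realType) (m : nat) (N : 'rV[R[i]]_m -> R) (hN : is_norm N).

Lemma normc_ge0 (z : R[i]) : 0 <= Normc.normc z.
Proof. by case: z => a b; rewrite /Normc.normc sqrtr_ge0. Qed.

Lemma normc_le (a b : R) : Normc.normc (a +i* b)%C <= `|a| + `|b|.
Proof.
rewrite /Normc.normc.
have ha : `|a| ^+ 2 = a ^+ 2 by rewrite -normrX ger0_norm ?sqr_ge0.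
have hb : `|b| ^+ 2 = b ^+ 2 by rewrite -normrX ger0_norm ?sqr_ge0.
have h0 : 0 <= `|a| * `|b| by rewrite mulr_ge0.
have h : a ^+ 2 + b ^+ 2 <= (`|a| + `|b|) ^+ 2.
  rewrite sqrrD ha hb; lra.
apply: le_trans (ler_wsqrtr h) _.
by rewrite sqrtr_sqr ger0_norm // addr_ge0.
Qed.

Lemma normc_real (r : R) : Normc.normc (r%:C)%C = `|r|.
Proof. by rewrite /Normc.normc /= [X in _ + X]expr2 mulr0 addr0 sqrtr_sqr. Qed.

Lemma N0 : N 0 = 0.
Proof.
case: hN => _ hZ _.
by rewrite -(scale0r (0 : 'rV[R[i]]_m)) hZ Normc.normc0 mul0r.
Qed.

Lemma NN v : N (- v) = N v.
Proof.
case: hN => _ hZ _.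
rewrite -scaleN1r hZ.
have -> : Normc.normc (-1 : R[i]) = 1.
  have -> : (-1 : R[i]) = ((-1 : R)%:C)%C by apply/eqP; rewrite eq_complex /= oppr0 !eqxx.
  by rewrite normc_real normrN normr1.
by rewrite mul1r.
Qed.

Lemma Nge0 v : 0 <= N v.
Proof.
case: hN => hD _ _.
have := hD v (- v); rewrite subrr N0 NN => h; lra.
Qed.

Lemma Ndist v w : `|N v - N w| <= N (v - w).
Proof.
case: hN => hD _ _.
have h1 := hD (w - v) v; rewrite subrK -opprB NN in h1.
have h2 := hD (v - w) w; rewrite subrK in h2.
rewrite ler_norml; apply/andP; split; lra.
Qed.

Lemma Nsum k (F : 'I_k -> 'rV[R[i]]_m) : N (\sum_(j < k) F j) <= \sum_(j < k) N (F j).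
Proof.
case: hN => hD _ _.
apply: (big_ind2 (fun (a : 'rV[R[i]]_m) (b : R) => N a <= b)); first by rewrite N0.
  move=> x1 x2 y1 y2 h1 h2; apply: le_trans (hD _ _) _; exact: lerD.
by [].
Qed.

Lemma Nupper v : N v <= \sum_(j < m) Normc.normc (v 0 j) * N (delta_mx 0 j).
Proof.
case: hN => _ hZ _.
rewrite {1}(row_sum_delta v); apply: le_trans (Nsum _ _) _.
by apply: ler_sum => j _; rewrite hZ.
Qed.

Definition phi (w : 'rV[R]_(m + m)) : 'rV[R[i]]_m :=
  \row_j ((w 0 (lshift m j)) +i* (w 0 (rshift m j)))%C.

Definition psi (v : 'rV[R[i]]_m) : 'rV[R]_(m + m) :=
  row_mx (\row_j complex.Re (v 0 j)) (\row_j complex.Im (v 0 j)).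

Lemma phiB w w' : phi (w - w') = phi w - phi w'.
Proof. by apply/rowP => j; rewrite !mxE. Qed.

Lemma phiZ (r : R) w : phi (r *: w) = (r%:C)%C *: phi w.
Proof.
apply/rowP => j; rewrite !mxE /=; apply/eqP; rewrite eq_complex /=.
by rewrite !mul0r subr0 addr0 !eqxx.
Qed.

Lemma phi_psi v : phi (psi v) = v.
Proof.
by apply/rowP => j; rewrite mxE /psi row_mxEl row_mxEr !mxE; case: (v 0 j).
Qed.

Lemma entry_le_norm n (w : 'rV[R]_n) k : `|w 0 k| <= `|w|.
Proof.
have /mapP[j Hj ->] : `|w 0 k| \in [seq `|w x.1 x.2| | x : 'I_1 * 'I_n].
  by apply/mapP; exists (ord0, k) => //=; rewrite mem_enum.
by rewrite [leRHS]/Num.Def.normr /= mx_normrE; apply/bigmax_geP; right => /=; exists j.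
Qed.

Definition Cst := \sum_(j < m) 2 * N (delta_mx 0 j).

Lemma phi_lip w : N (phi w) <= Cst * `|w|.
Proof.
apply: le_trans (Nupper _) _.
rewrite /Cst mulr_suml; apply: ler_sum => j _.
rewrite mulrAC [_ * `|w|]mulrC; apply: ler_wpM2r; first exact: Nge0.
rewrite mxE; apply: le_trans (normc_le _ _) _.
by rewrite mulrC mulr2n mulrDl !mul1r; apply: lerD; apply: entry_le_norm.
Qed.

Lemma Cst_ge0 : 0 <= Cst.
Proof. by apply: sumr_ge0 => j _; rewrite mulr_ge0 ?Nge0. Qed.

Definition g w := N (phi w).

Lemma g_cont : continuous g.
Proof.
move=> x; apply/(@cvgrPdist_lt _ _ _ (nbhs x) (@nbhs_filter _ x) g (g x)) => e e0.
apply/(@nbhs_normP R 'rV[R]_(m + m)); exists (e / (Cst + 1)).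
  by rewrite /= divr_gt0 // ltr_wpDl ?Cst_ge0.
move=> y /= hy; apply: le_lt_trans (Ndist _ _) _.
rewrite -phiB; apply: le_lt_trans (phi_lip _) _.
have hC : 0 < Cst + 1 by rewrite ltr_wpDl ?Cst_ge0.
rewrite ltr_pdivlMr // in hy.
apply: le_lt_trans hy; rewrite mulrC; apply: ler_wpM2l; first exact: normr_ge0.
by rewrite lerDl.
Qed.


Lemma normalize_S (w : 'rV[R]_(m + m)) : w != 0 -> `| `|w|^-1 *: w | = 1.
Proof.
move=> w0; rewrite normrZ normfV normr_id mulVf //.
by rewrite normr_eq0.
Qed.

Lemma norm_lower_aux : exists2 c : R, 0 < c & forall (v : 'rV[R[i]]_m) (j : 'I_m), Normc.normc (v 0 j) <= c * N v.
Proof.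
have [m0|mpos] := posnP m.
  by exists 1 => // v [k hk]; exfalso; move: hk; rewrite m0.
pose S := [set w : 'rV[R]_(m + m) | `|w| = 1].
have Scl : closed S.
  have h1 := @norm_continuous R 'rV[R]_(m + m).
  have h2 := (continuous_closedP _).1 h1.
  apply: (h2 [set x | x = 1]); exact: closed_eq.
have Sbd : bounded_set S.
  rewrite /bounded_near.
  by apply: filterS (nbhs_pinfty_ge (num_real (1 : R))) => M h1 t /= ->.
have Scpt : compact S by apply: bounded_closed_compact.
pose w0 : 'rV[R]_(m + m) := delta_mx 0 (lshift m (Ordinal mpos)).
have w00 : w0 != 0.
  apply/eqP => /rowP /(_ (lshift m (Ordinal mpos))); rewrite !mxE !eqxx /=.
  by move/eqP; rewrite oner_eq0.
have S0 : S !=set0 by exists (`|w0|^-1 *: w0); rewrite /S /= normalize_S.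
have [c cS cmin] := compact_EVT_min S0 Scpt (continuous_subspaceT g_cont).
have cS' : `|c| = 1 by move: cS; rewrite inE.
have gpos : 0 < g c.
  rewrite lt_def Nge0 andbT; apply/eqP => gc0.
  case: hN => _ _ h0; have := h0 _ gc0 => /rowP hc.
  have c0 : c = 0.
    apply/rowP => k; rewrite [RHS]mxE.
    case: (splitP k) => j hj.
    - have -> : k = lshift m j by apply: val_inj.
      by have := hc j; rewrite !mxE => -[].
    - have -> : k = rshift m j by apply: val_inj.
      by have := hc j; rewrite !mxE => -[].
  by move: cS'; rewrite c0 normr0 => /eqP; rewrite eq_sym oner_eq0.
exists (2 / g c); first by rewrite divr_gt0.
move=> v j.
have [v0|v0] := eqVneq (psi v) 0.
  have : v = 0 by rewrite -[v]phi_psi v0; apply/rowP => k; rewrite !mxE.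
  by move=> ->; rewrite mxE Normc.normc0 N0 mulr0.
set t := `|psi v|.
have tpos : 0 < t by rewrite normr_gt0.
have hu : S (t^-1 *: psi v) by rewrite /S /= normalize_S.
have := cmin _ (mem_set hu); rewrite /g phiZ phi_psi.
case: hN => _ hZ _; rewrite hZ normc_real ger0_norm; last by rewrite invr_ge0 ltW.
move=> hle.
have hv : Normc.normc (v 0 j) <= 2 * t.
  have -> : v 0 j = (complex.Re (v 0 j) +i* complex.Im (v 0 j))%C by case: (v 0 j).
  apply: le_trans (normc_le _ _) _; rewrite mulr2n mulrDl mul1r.
  apply: lerD.
    by have := entry_le_norm _ (psi v) (lshift m j); rewrite /psi row_mxEl mxE.
  by have := entry_le_norm _ (psi v) (rshift m j); rewrite /psi row_mxEr mxE.
apply: le_trans hv _.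
have h1 : t * g c <= N v.
  have := ler_wpM2l (ltW tpos) hle; rewrite mulrA mulfV ?gt_eqF // mul1r.
  by rewrite /g.
rewrite -mulrA; apply: ler_wpM2l => //.
by rewrite mulrC ler_pdivlMr.
Qed.
End Hard.

Lemma span_exists (F : fieldType) m (V : 'rV[F]_m -> Prop) :
  V 0 -> (forall a u v, V u -> V v -> V (a *: u + v)) ->
  exists p, exists M : 'M[F]_(p, m),
    [/\ row_free M, forall i, V (row i M) & forall v, V v -> (v <= M)%MS].
Proof.
move=> V0 Vc.
pose P k := `[< exists M : 'M[F]_(k, m), row_free M /\ forall i, V (row i M) >].
have exP : exists k, P k.
  exists 0%N; apply/asboolP; exists 0; split; last by case.
  by rewrite /row_free eqn_leq rank_leq_row /=.
have ubP : forall k, P k -> (k <= m)%N.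
  move=> k /asboolP [M [fM _]]; move/eqP: fM => <-; exact: rank_leq_col.
have [k /asboolP [M [fM VM]] kmax] := ex_maxnP exP ubP.
exists k, M; split => // v Vv.
case: (boolP (v <= M)%MS) => // vM; exfalso.
pose M' := col_mx M v.
have hsub : (M <= M')%MS by rewrite -addsmxE addsmxSl.
have hnot : ~~ (M' <= M)%MS by rewrite col_mx_sub negb_and vM orbT.
have hlt := mxrank_leqif_sup hsub.
have rk : \rank M' = (k + 1)%N.
  apply/eqP; rewrite eqn_leq rank_leq_row /=.
  have := ltn_leqif hlt; rewrite hnot (eqP fM) => /= h.
  by rewrite [X in (X <= _)%N]addn1.
have PM' : P (k + 1)%N.
  apply/asboolP; exists M'; split; first by rewrite /row_free rk.
  move=> i; case: (splitP i) => j hj.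
  - have -> : i = lshift 1 j by apply: val_inj.
    by rewrite rowKu.
  - have -> : i = rshift k j by apply: val_inj.
    rewrite rowKd; have -> : row j v = v.
      by apply/rowP => l; rewrite mxE (ord1 j).
    exact: Vv.
by have := kmax _ PM'; rewrite addn1 ltnn.
Qed.

Section Main.
Variables (R : realType) (X : countType) (n : X -> nat).
Local Notation sec := (sec R n).

Definition supp_in (S : {fset X}) (f : sec) := forall x, x \notin S -> f x = 0.

Lemma sec_ext (f g : sec) : (forall x, f x = g x) -> f = g.
Proof. exact: functional_extensionality_dep. Qed.

Definition sec0 : sec := fun x => 0.

Lemma dual_pairDl m a (p q v : 'rV[R[i]]_m) :
  dual_pair (a *: p + q) v = a * dual_pair p v + dual_pair q v.
Proof.
rewrite /dual_pair mulr_sumr -big_split; apply: eq_bigr => j _.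
by rewrite !mxE mulrDl mulrA.
Qed.

Lemma dual_pairC m (p v : 'rV[R[i]]_m) : dual_pair p v = dual_pair v p.
Proof. by apply: eq_bigr => j _; rewrite mulrC. Qed.

Lemma dual_pairDr m a (p q v : 'rV[R[i]]_m) :
  dual_pair v (a *: p + q) = a * dual_pair v p + dual_pair v q.
Proof. by rewrite !(dual_pairC _ v) dual_pairDl. Qed.

Lemma dual_pair0l m (v : 'rV[R[i]]_m) : dual_pair 0 v = 0.
Proof. by apply: big1 => j _; rewrite mxE mul0r. Qed.

Lemma dual_pair0r m (v : 'rV[R[i]]_m) : dual_pair v 0 = 0.
Proof. by rewrite dual_pairC dual_pair0l. Qed.

Lemma pairing_fin (S : {fset X}) (phi f : sec) :
  (forall x, x \notin S -> dual_pair (phi x) (f x) = 0) ->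
  pairing phi f = \sum_(x <- S) dual_pair (phi x) (f x).
Proof.
move=> h; rewrite /pairing (fsbigE (enum_fset S)) ?fset_uniq //.
  by apply: eq_bigl => x; rewrite in_setT.
by move=> x _ xS; apply: h.
Qed.

Lemma pairingC (phi f : sec) : pairing phi f = pairing f phi.
Proof. by apply: eq_fsbigr => x _; rewrite dual_pairC. Qed.


Local Notation Idx L := {x : L & 'I_(n (fsval x))}.

Definition coords (L : {fset X}) (f : sec) (q : Idx L) : R[i] :=
  f (fsval (tag q)) 0 (tagged q).

Definition secof (L : {fset X}) (c : Idx L -> R[i]) : sec :=
  fun x => \row_(j < n x)
    \sum_(q : Idx L | (fsval (tag q) == x) && (tagged q == j :> nat)) c q.

Lemma tagE (L : {fset X}) (q : Idx L) (x : L) (j : 'I_(n (fsval x))) :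
  ((fsval (tag q) == fsval x) && (tagged q == j :> nat)) =
  (q == Tagged (fun x : L => 'I_(n (fsval x))) j).
Proof.
apply/idP/eqP => [|->]; last by rewrite /= !eqxx.
case: q => y k /= /andP[/eqP hxy /eqP hkj].
have e : y = x by apply: val_inj.
subst y; have -> : k = j by apply: val_inj.
by [].
Qed.

Lemma secof_out (L : {fset X}) c x : x \notin L -> secof L c x = 0.
Proof.
move=> xL; apply/rowP => j; rewrite !mxE; apply: big_pred0 => q.
apply/negbTE; apply/negP => /andP[/eqP hx _].
by move: xL; rewrite -hx (fsvalP (tag q)).
Qed.

Lemma sum_Idx (L : {fset X}) (F : forall x : X, 'I_(n x) -> R[i]) :
  \sum_(x <- L) \sum_(j < n x) F x j = \sum_(q : Idx L) F (fsval (tag q)) (tagged q).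
Proof.
rewrite big_seq_fsetE /=.
exact: (sig_big_dep (fun x : L => true) (fun x (j : 'I_(n (fsval x))) => true)
  (fun x (j : 'I_(n (fsval x))) => F (fsval x) j)).
Qed.

Lemma secof_in (L : {fset X}) (c : Idx L -> R[i]) (x : L) (j : 'I_(n (fsval x))) :
  secof L c (fsval x) 0 j = c (Tagged (fun x : L => 'I_(n (fsval x))) j).
Proof. by rewrite mxE; apply: big_pred1 => q; rewrite tagE. Qed.

Lemma coords_secof (L : {fset X}) c q : coords L (secof L c) q = c q.
Proof. by case: q => x j; rewrite /coords /= secof_in. Qed.

Lemma pair_secof (L : {fset X}) (psi : sec) c :
  pairing psi (secof L c) = \sum_(q : Idx L) coords L psi q * c q.
Proof.
rewrite (pairing_fin L); last by move=> x xL; rewrite secof_out // dual_pair0r.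
rewrite /dual_pair (sum_Idx L (fun x j => psi x 0 j * secof L c x 0 j)).
by apply: eq_bigr => -[x j] _ /=; rewrite secof_in.
Qed.

Lemma pair_secofl (L : {fset X}) (f : sec) c :
  pairing (secof L c) f = \sum_(q : Idx L) c q * coords L f q.
Proof.
by rewrite pairingC pair_secof; apply: eq_bigr => q _; rewrite mulrC.
Qed.

Definition delta (x : X) (j : 'I_(n x)) : sec :=
  secof [fset x]%fset (fun q => (q == Tagged (fun y : [fset x]%fset => 'I_(n (fsval y)))
      (j : 'I_(n (fsval (FSetSub (fset11 x))))))%:R).

Lemma pair_delta (psi : sec) x j : pairing psi (delta x j) = psi x 0 j.
Proof.
rewrite pair_secof (bigD1 (Tagged (fun y : [fset x]%fset => 'I_(n (fsval y)))
      (j : 'I_(n (fsval (FSetSub (fset11 x))))))) //= eqxx mulr1 big1 ?addr0 //.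
by move=> q /negbTE ->; rewrite mulr0.
Qed.

Lemma delta_out x j y : y != x -> delta x j y = 0.
Proof. by move=> yx; rewrite /delta secof_out // inE. Qed.

Lemma sec_eq_pair (phi psi : sec) : (forall f, pairing phi f = pairing psi f) -> phi = psi.
Proof.
move=> h; apply: sec_ext => x; apply/rowP => j.
by rewrite -!(pair_delta _ x j) h.
Qed.

Lemma sec_eq_coords (L : {fset X}) (f g : sec) : supp_in L f -> supp_in L g ->
  (forall q, coords L f q = coords L g q) -> f = g.
Proof.
move=> hf hg h; apply: sec_ext => x; case: (boolP (x \in L)) => xL; last first.
  by rewrite hf // hg.
apply/rowP => j.
exact: (h (Tagged (fun y : L => 'I_(n (fsval y))) (j : 'I_(n (fsval (FSetSub xL)))))).
Qed.

Lemma Gc_supp (phi : sec) : Gc phi <-> exists S, supp_in S phi.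
Proof. by []. Qed.

Lemma Gc0 : Gc sec0.
Proof. by exists fset0. Qed.

Lemma Gc_comb a (phi psi : sec) : Gc phi -> Gc psi -> Gc (sec_add (sec_scale a phi) psi).
Proof.
move=> [S1 h1] [S2 h2]; exists (S1 `|` S2)%fset => x; rewrite inE negb_or => /andP[x1 x2].
by rewrite /sec_add /sec_scale h1 // h2 // scaler0 addr0.
Qed.

Lemma pairingDl a (phi psi f : sec) : Gc phi -> Gc psi ->
  pairing (sec_add (sec_scale a phi) psi) f = a * pairing phi f + pairing psi f.
Proof.
move=> [S1 h1] [S2 h2]; set S := (S1 `|` S2)%fset.
have hS1 x : x \notin S -> x \notin S1 by rewrite inE negb_or => /andP[].
have hS2 x : x \notin S -> x \notin S2 by rewrite inE negb_or => /andP[].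
rewrite !(pairing_fin S).
- rewrite mulr_sumr -big_split; apply: eq_bigr => x _.
  by rewrite /sec_add /sec_scale dual_pairDl.
- by move=> x /hS2 /h2 ->; rewrite dual_pair0l.
- by move=> x /hS1 /h1 ->; rewrite dual_pair0l.
- by move=> x xS; rewrite /sec_add /sec_scale h1 ?h2 ?hS1 ?hS2 // scaler0 addr0 dual_pair0l.
Qed.

Lemma pairingDr a (phi f g : sec) : Gc phi ->
  pairing phi (sec_add (sec_scale a f) g) = a * pairing phi f + pairing phi g.
Proof.
move=> [S h]; rewrite !(pairing_fin S); try by move=> x /h ->; rewrite dual_pair0l.
rewrite mulr_sumr -big_split; apply: eq_bigr => x _.
by rewrite /sec_add /sec_scale dual_pairDr.
Qed.

Definition lincomb p (d : 'I_p -> R[i]) (z : 'I_p -> sec) : sec :=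
  fun x => \sum_(j < p) d j *: z j x.
Arguments lincomb {p}.

Lemma lincomb0 (d : 'I_0 -> R[i]) z : lincomb d z = sec0.
Proof. by apply: sec_ext => x; rewrite /lincomb big_ord0. Qed.

Lemma lincombS p (d : 'I_p.+1 -> R[i]) z :
  lincomb d z = sec_add (sec_scale (d ord_max) (z ord_max))
    (lincomb (fun j => d (widen_ord (leqnSn p) j)) (fun j => z (widen_ord (leqnSn p) j))).
Proof. by apply: sec_ext => x; rewrite /lincomb /sec_add /sec_scale big_ord_recr addrC. Qed.

Definition lin_on (P : sec -> Prop) (T : sec -> sec) :=
  [/\ P sec0, (forall a f g, P f -> P g -> P (sec_add (sec_scale a f) g))
    & (forall a f g, P f -> P g -> T (sec_add (sec_scale a f) g) = sec_add (sec_scale a (T f)) (T g))].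

Lemma lin_on0 {P T} : lin_on P T -> T sec0 = sec0.
Proof.
case=> P0 _ hT.
have e : sec_add (sec_scale (-1) sec0) sec0 = sec0.
  by apply: sec_ext => x; rewrite /sec_add /sec_scale /sec0 scaler0 addr0.
have := hT (-1) _ _ P0 P0; rewrite e => ->.
by apply: sec_ext => x; rewrite /sec_add /sec_scale scaleN1r addNr.
Qed.

Lemma lin_on_comb {P T} (hPT : lin_on P T) p (d : 'I_p -> R[i]) (z : 'I_p -> sec) :
  (forall j, P (z j)) ->
  P (lincomb d z) /\ T (lincomb d z) = lincomb d (fun j => T (z j)).
Proof.
have T0 := lin_on0 hPT; case: hPT => P0 Pc hT.
elim: p d z => [|p IH] d z Pz; first by rewrite !lincomb0.
rewrite !lincombS; have [IH1 IH2] := IH (fun j => d (widen_ord (leqnSn p) j))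
  (fun j => z (widen_ord (leqnSn p) j)) (fun j => Pz _).
by split; [apply: Pc | rewrite hT // IH2].
Qed.

Lemma coords_lincomb (L : {fset X}) p d (z : 'I_p -> sec) q :
  coords L (lincomb d z) q = \sum_(j < p) d j * coords L (z j) q.
Proof. by rewrite /coords /lincomb summxE; apply: eq_bigr => j _; rewrite mxE. Qed.

Lemma pairing0l f : pairing sec0 f = 0.
Proof. by rewrite (pairing_fin fset0) ?big_seq_fset0 // => x _; rewrite dual_pair0l. Qed.

Lemma pairing_lincomb p d (z : 'I_p -> sec) f : (forall j, Gc (z j)) ->
  pairing (lincomb d z) f = \sum_(j < p) d j * pairing (z j) f.
Proof.
have hl : lin_on (@Gc R X n) id by split => //; [exact: Gc0 | move=> *; exact: Gc_comb].
elim: p d z => [|p IH] d z Gz; first by rewrite lincomb0 big_ord0 pairing0l.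
have [G1 _] := lin_on_comb hl _ (fun j => d (widen_ord (leqnSn p) j)) (fun j => z (widen_ord (leqnSn p) j)) (fun j => Gz (widen_ord (leqnSn p) j)).
by rewrite lincombS pairingDl // IH // big_ord_recr /= addrC.
Qed.

Lemma sum_enum (T : finType) (F : T -> R[i]) :
  \sum_(q : T) F q = \sum_(k < #|T|) F (enum_val k).
Proof. by rewrite (reindex (@enum_val T T)) //; apply: onW_bij; exact: enum_val_bij. Qed.

Definition vec (L : {fset X}) (f : sec) : 'rV[R[i]]_#|{: Idx L}| :=
  \row_k coords L f (enum_val k).

Lemma coords_vec (L : {fset X}) f q : coords L f q = vec L f 0 (enum_rank q).
Proof. by rewrite mxE enum_rankK. Qed.

Lemma vec_mul (L : {fset X}) f (c : 'cV[R[i]]_#|{: Idx L}|) :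
  (vec L f *m c) 0 0 = \sum_(q : Idx L) coords L f q * c (enum_rank q) 0.
Proof.
rewrite mxE [RHS]sum_enum; apply: eq_bigr => k _; by rewrite mxE enum_valK.
Qed.

Lemma vec_comb (L : {fset X}) a f g : vec L (sec_add (sec_scale a f) g) = a *: vec L f + vec L g.
Proof. by apply/rowP => k; rewrite !mxE /coords /sec_add /sec_scale !mxE. Qed.

Lemma vec0 (L : {fset X}) : vec L sec0 = 0.
Proof. by apply/rowP => k; rewrite !mxE /coords /sec0 mxE. Qed.

Lemma vec_lincomb (L : {fset X}) p (d : 'rV[R[i]]_p) (z : 'I_p -> sec) :
  vec L (lincomb (fun j => d 0 j) z) = d *m \matrix_(j, k) vec L (z j) 0 k.
Proof.
apply/rowP => k; rewrite !mxE coords_lincomb; apply: eq_bigr => j _.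
by rewrite !mxE.
Qed.

Lemma supp_comb (L : {fset X}) a f g : supp_in L f -> supp_in L g -> supp_in L (sec_add (sec_scale a f) g).
Proof. by move=> hf hg x xL; rewrite /sec_add /sec_scale hf // hg // scaler0 addr0. Qed.

Lemma supp_lincomb (L : {fset X}) p d (z : 'I_p -> sec) : (forall j, supp_in L (z j)) -> supp_in L (lincomb d z).
Proof. by move=> h x xL; rewrite /lincomb big1 // => j _; rewrite h // scaler0. Qed.

Lemma normc_sum (I : Type) (r : seq I) (P : pred I) (F : I -> R[i]) :
  Normc.normc (\sum_(i <- r | P i) F i) <= \sum_(i <- r | P i) Normc.normc (F i).
Proof.
apply: (big_ind2 (fun (a : R[i]) (b : R) => Normc.normc a <= b)).
- by rewrite Normc.normc0.
- by move=> x1 x2 y1 y2 h1 h2; apply: le_trans (@le_normcD R x1 y1) _; apply: lerD.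
- by move=> i _.
Qed.

Lemma sum_IdxR (L : {fset X}) (F : forall x : X, 'I_(n x) -> R) :
  \sum_(x <- L) \sum_(j < n x) F x j = \sum_(q : Idx L) F (fsval (tag q)) (tagged q).
Proof.
rewrite big_seq_fsetE /=.
exact: (sig_big_dep (fun x : L => true) (fun x (j : 'I_(n (fsval x))) => true)
  (fun x (j : 'I_(n (fsval x))) => F (fsval x) j)).
Qed.

Lemma pairing_scale a (phi f : sec) : Gc phi -> pairing phi (sec_scale a f) = a * pairing phi f.
Proof.
move=> Gphi.
have -> : sec_scale a f = sec_add (sec_scale a f) sec0.
  by apply: sec_ext => x; rewrite /sec_add /sec0 addr0.
by rewrite pairingDr // [pairing phi sec0]pairingC pairing0l addr0.
Qed.

Lemma pairing_sub (phi f g : sec) : Gc phi ->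
  pairing phi (sec_sub f g) = pairing phi f - pairing phi g.
Proof.
move=> Gphi.
have -> : sec_sub f g = sec_add (sec_scale (-1) g) f.
  by apply: sec_ext => x; rewrite /sec_add /sec_sub /sec_scale scaleN1r addrC.
by rewrite pairingDr // mulN1r addrC.
Qed.

Section Op.
Variables (A A' : sec -> sec).
Hypothesis hlin : sec_linear A.
Hypothesis hA'Gc : forall phi, Gc phi -> Gc (A' phi).
Hypothesis hdual : forall phi f, Gc phi -> pairing (A' phi) f = pairing phi (A f).
Hypothesis hinj : forall phi psi, Gc phi -> Gc psi -> A' phi = A' psi -> phi = psi.

Lemma A_lin : lin_on (fun _ => True) A.
Proof. by split => // a f g _ _; apply: hlin. Qed.

Lemma A'_lin : lin_on (@Gc R X n) A'.
Proof.
split; [exact: Gc0 | by move=> *; apply: Gc_comb |].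
move=> a f g Gf Gg; apply: sec_eq_pair => h.
rewrite hdual; last exact: Gc_comb.
rewrite pairingDl // pairingDl; try exact: hA'Gc.
by rewrite !hdual.
Qed.

Lemma span_W (K : {fset X}) :
  exists p, exists phis : 'I_p -> sec, exists M : 'M[R[i]]_(p, #|{: Idx K}|),
  [/\ forall j, Gc (phis j) /\ supp_in K (A' (phis j)), row_free M,
      M = \matrix_(j, k) vec K (A' (phis j)) 0 k
    & forall phi, Gc phi -> supp_in K (A' phi) ->
      exists d : 'rV_p, phi = lincomb (fun j => d 0 j) phis /\ vec K (A' phi) = d *m M].
Proof.
pose V v := exists phi, [/\ Gc phi, supp_in K (A' phi) & vec K (A' phi) = v].
have V0 : V 0.
  exists sec0; rewrite (lin_on0 A'_lin) vec0; split => //; exact: Gc0.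
have Vc : forall a u v, V u -> V v -> V (a *: u + v).
  move=> a u v [f [Gf sf <-]] [g [Gg sg <-]].
  exists (sec_add (sec_scale a f) g); case: A'_lin => _ _ hA.
  by rewrite hA // vec_comb; split => //; [exact: Gc_comb | exact: supp_comb].
have [p [M [fM VM hV]]] := @span_exists _ _ V V0 Vc.
have [phis hphis] := boolp.choice VM.
have eM : M = \matrix_(j, k) vec K (A' (phis j)) 0 k.
  apply/matrixP => j k; rewrite mxE.
  by have [_ _ ->] := hphis j; rewrite mxE.
exists p, phis, M; split => //.
  by move=> j; have [? ? _] := hphis j.
move=> phi Gphi sphi.
have /submxP [D eD] : (vec K (A' phi) <= M)%MS by apply: hV; exists phi.
exists D; split => //.
have Gz : forall j, Gc (phis j) by move=> j; have [? ? _] := hphis j.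
have [Gpsi epsi] := lin_on_comb A'_lin _ (fun j => D 0 j) phis Gz.
apply: hinj => //; apply: (@sec_eq_coords K) => //.
  by rewrite epsi; apply: supp_lincomb => j; have [_ ? _] := hphis j.
move=> q; rewrite !coords_vec epsi.
by rewrite (vec_lincomb K _ D (fun j => A' (phis j))) -eM -eD.
Qed.

Lemma pair_secof_vec (L : {fset X}) (c : 'cV[R[i]]_#|{: Idx L}|) f :
  pairing (secof L (fun q => c (enum_rank q) 0)) f = (vec L f *m c) 0 0.
Proof. by rewrite pair_secofl vec_mul; apply: eq_bigr => q _; rewrite mulrC. Qed.

Lemma coords_at (L : {fset X}) (f : sec) x (xL : x \in L) (j : 'I_(n x)) :
  f x 0 j = coords L f (Tagged (fun y : L => 'I_(n (fsval y))) (j : 'I_(n (fsval (FSetSub xL))))).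
Proof. by []. Qed.

Lemma Lsurj (K L : {fset X}) (y : sec) :
  (forall phi, supp_in L phi -> supp_in K (A' phi) -> pairing phi y = 0) ->
  exists z, (forall x, x \in K -> z x = 0) /\ (forall x, x \in L -> A z x = y x).
Proof.
move=> hy.
pose zeroK (z : sec) := forall x, x \in K -> z x = 0.
pose V v := exists z, zeroK z /\ vec L (A z) = v.
have V0 : V 0 by exists sec0; rewrite (lin_on0 A_lin) vec0.
have Vc : forall a u v, V u -> V v -> V (a *: u + v).
  move=> a u v [f [zf <-]] [g [zg <-]].
  exists (sec_add (sec_scale a f) g); rewrite hlin vec_comb; split => //.
  by move=> x xK; rewrite /sec_add /sec_scale zf // zg // scaler0 addr0.
have [p [M [_ VM hV]]] := @span_exists _ _ V V0 Vc.
have [zs hzs] := boolp.choice VM.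
have eM : M = \matrix_(j, k) vec L (A (zs j)) 0 k.
  apply/matrixP => j k; rewrite mxE.
  by have [_ ->] := hzs j; rewrite mxE.
case: (boolP (vec L y <= M)%MS) => yM.
  have /submxP [D eD] := yM.
  have [_ ez] := lin_on_comb A_lin _ (fun j => D 0 j) zs (fun j => I).
  exists (lincomb (fun j => D 0 j) zs); split.
    move=> x xK; rewrite /lincomb big1 // => j _.
    by have [hz _] := hzs j; rewrite hz // scaler0.
  have E : vec L (A (lincomb (fun j => D 0 j) zs)) = vec L y.
    by rewrite ez (vec_lincomb L _ D (fun j => A (zs j))) -eM -eD.
  move=> x xL; apply/rowP => j.
  pose q := Tagged (fun y : L => 'I_(n (fsval y))) (j : 'I_(n (fsval (FSetSub xL)))).
  have := congr1 (fun v : 'rV[R[i]]_#|{: Idx L}| => v 0 (enum_rank q)) E.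
  by rewrite !mxE enum_rankK.
exfalso.
rewrite submxE in yM.
have [k hk] : exists k, (vec L y *m cokermx M) 0 k != 0 by apply/rV0Pn.
pose c := col k (cokermx M).
have ec u : (u *m c) 0 0 = (u *m cokermx M) 0 k.
  by rewrite !mxE; apply: eq_bigr => l _; rewrite mxE.
pose phi := secof L (fun q => c (enum_rank q) 0).
have Gphi : Gc phi by exists L => x xL; rewrite /phi secof_out.
suff hsupp : supp_in K (A' phi).
  have := hy phi (fun x xL => secof_out _ _ _ xL) hsupp.
  by rewrite pair_secof_vec ec => h; rewrite h eqxx in hk.
move=> x xK; apply/rowP => j; rewrite [RHS]mxE.
rewrite -pair_delta hdual // pair_secof_vec ec.
have Vd : V (vec L (A (delta x j))).
  exists (delta x j); split => // w wK; apply: delta_out.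
  by apply: contraNneq xK => <-.
have /submxP [D ->] := hV _ Vd.
by rewrite -mulmxA mulmx_coker mulmx0 mxE.
Qed.

Variable nrm : forall x : X, 'rV[R[i]]_(n x) -> R.
Hypothesis hnrm : forall x, is_norm (nrm x).

Lemma pK_secof (K : {fset X}) c :
  pK nrm K (secof K c) <=
  \sum_(q : Idx K) Normc.normc (c q) * nrm (fsval (tag q)) (delta_mx 0 (tagged q)).
Proof.
rewrite /pK.
apply: (@le_trans _ _ (\sum_(x <- K) \sum_(j < n x)
   Normc.normc (secof K c x 0 j) * nrm x (delta_mx 0 j))).
  by apply: ler_sum => x _; apply: Nupper.
rewrite (sum_IdxR K (fun x j => Normc.normc (secof K c x 0 j) * nrm x (delta_mx 0 j))).
by apply: ler_sum => -[x j] _ /=; rewrite secof_in lexx.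
Qed.

Lemma nrm_le_pK (L : {fset X}) (f : sec) x : x \in L -> nrm x (f x) <= pK nrm L f.
Proof.
move=> xL; rewrite /pK (bigD1_seq x) //= ?fset_uniq // lerDl.
by apply: sumr_ge0 => y _; exact: Nge0.
Qed.

Lemma pK_ge0 (L : {fset X}) (f : sec) : 0 <= pK nrm L f.
Proof. by apply: sumr_ge0 => y _; exact: Nge0. Qed.

Lemma core (x0 : X) (K : {fset X}) : exists eps : R, 0 < eps /\ exists K' : {fset X},
  x0 \in K' /\ forall f : sec, pK nrm K' f <= 1 -> exists f0 : sec, pK nrm K f0 <= 1 /\
    forall phi, Gc phi -> supp_in K (A' phi) ->
      pairing (A' phi) f0 = (eps%:C)%C * pairing phi f.
Proof.
have [p [phis [M [hphis fM eM hW]]]] := span_W K.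
have [Rm eRm] := row_freeP fM.
have [S hS] := boolp.choice (fun j => proj1 (hphis j)).
have [cst hcst] : exists cst : X -> R, forall x, 0 < cst x /\
    forall (v : 'rV[R[i]]_(n x)) (j : 'I_(n x)), Normc.normc (v 0 j) <= cst x * nrm x v.
  have h : forall x, exists c : R, 0 < c /\
      forall (v : 'rV[R[i]]_(n x)) (j : 'I_(n x)), Normc.normc (v 0 j) <= c * nrm x v.
    by move=> x; have [c c0 hc] := @norm_lower_aux _ _ _ (hnrm x); exists c.
  by have [f hf] := boolp.choice h; exists f.
pose U := \big[fsetU/fset0]_(j < p) S j.
pose K' := (x0 |` U)%fset.
have inK' : forall j x, x \in S j -> x \in K'.
  move=> j x xS; rewrite !inE; apply/orP; right.
  by rewrite /U (bigD1 j) //= inE xS.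
pose B j := \sum_(x <- S j) \sum_(i < n x) Normc.normc (phis j x 0 i) * cst x.
have Bge0 j : 0 <= B j.
  apply: sumr_ge0 => x _; apply: sumr_ge0 => i _.
  by rewrite mulr_ge0 ?normc_ge0 // ltW //; case: (hcst x).
have hB : forall f j, pK nrm K' f <= 1 -> Normc.normc (pairing (phis j) f) <= B j.
  move=> f j hf.
  rewrite (pairing_fin (S j)); last by move=> x /(hS j) ->; rewrite dual_pair0l.
  apply: le_trans (normc_sum _ _ _ _) _.
  rewrite /B !big_seq; apply: ler_sum => x xS.
  apply: le_trans (normc_sum _ _ _ _) _; apply: ler_sum => i _.
  rewrite Normc.normcM; apply: ler_wpM2l; first exact: normc_ge0.
  have [c0 hc] := hcst x.
  apply: le_trans (hc (f x) i) _.
  rewrite -[leRHS]mulr1; apply: ler_wpM2l; first exact: ltW.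
  exact: le_trans (@nrm_le_pK K' f x (inK' _ _ xS)) hf.
pose G k := \sum_(j < p) Normc.normc (Rm k j) * B j.
have Gge0 k : 0 <= G k by apply: sumr_ge0 => j _; rewrite mulr_ge0 ?normc_ge0.
pose E (q : Idx K) := nrm (fsval (tag q)) (delta_mx 0 (tagged q)).
have Ege0 q : 0 <= E q by exact: Nge0.
pose Tot := \sum_(q : Idx K) G (enum_rank q) * E q.
have Tot0 : 0 <= Tot by apply: sumr_ge0 => q _; rewrite mulr_ge0.
pose eps := (Tot + 1)^-1.
have eps0 : 0 < eps by rewrite invr_gt0 ltr_wpDl.
exists eps; split => //; exists K'; split.
  by rewrite !inE eqxx.
move=> f hf.
pose b : 'cV[R[i]]_p := \col_j pairing (phis j) f.
pose gv := (eps%:C)%C *: (Rm *m b).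
exists (secof K (fun q => gv (enum_rank q) 0)); split.
  apply: le_trans (pK_secof _ _) _.
  apply: (@le_trans _ _ (eps * Tot)).
    rewrite /Tot mulr_sumr; apply: ler_sum => q _; rewrite mulrA.
    apply: ler_wpM2r; first exact: Ege0.
    rewrite /gv mxE Normc.normcM normc_real (ger0_norm (ltW eps0)).
    apply: ler_wpM2l; first exact: ltW.
    rewrite mxE; apply: le_trans (normc_sum _ _ _ _) _; apply: ler_sum => j _.
    rewrite Normc.normcM; apply: ler_wpM2l; first exact: normc_ge0.
    by rewrite mxE; exact: hB.
  by rewrite mulrC ler_pdivrMr ?ltr_wpDl // mul1r lerDl ler01.
move=> phi Gphi sphi.
have [d [ephi evec]] := hW phi Gphi sphi.
rewrite pair_secof.
have -> : \sum_(q : Idx K) coords K (A' phi) q * gv (enum_rank q) 0 =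
          (vec K (A' phi) *m gv) 0 0 by rewrite vec_mul.
have -> : vec K (A' phi) *m gv = (eps%:C)%C *: (d *m b).
  by rewrite evec /gv -scalemxAr -mulmxA (mulmxA M) eRm mul1mx.
rewrite mxE; congr (_ * _).
rewrite [in RHS]ephi pairing_lincomb; last by move=> j; case: (hphis j).
by rewrite mxE; apply: eq_bigr => j _; rewrite mxE.
Qed.

Lemma final (x0 : X) (K : {fset X}) : exists eps : R, 0 < eps /\
  exists K' : {fset X}, K' != fset0 /\
    sec_rscale eps (U nrm K') `<=` sec_closure nrm (A @` U nrm K).
Proof.
have [eps [eps0 [K' [x0K' hcore]]]] := core x0 K.
exists eps; split => //; exists K'; split.
  by apply/eqP => e; move: x0K'; rewrite e inE.
move=> _ [f Uf ->] O Oopen Og.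
have [f0 [pf0 hf0]] := hcore f Uf.
have [L [d [d0 hd]]] := Oopen _ Og.
pose y := sec_sub (sec_scale (eps%:C)%C f) (A f0).
have hy : forall phi, supp_in L phi -> supp_in K (A' phi) -> pairing phi y = 0.
  move=> phi sL sK; have Gphi : Gc phi by exists L.
  by rewrite pairing_sub // pairing_scale // -hf0 // hdual // subrr.
have [z [zK zL]] := Lsurj _ _ _ hy.
pose f1 := sec_add f0 z.
have e1 : A f1 = sec_add (A f0) (A z).
  have e : f1 = sec_add (sec_scale 1 f0) z.
    by apply: sec_ext => x; rewrite /f1 /sec_add /sec_scale scale1r.
  rewrite e hlin; apply: sec_ext => x; by rewrite /sec_add /sec_scale scale1r.
exists (A f1); split.
  exists f1 => //; rewrite /U /= /pK.
  rewrite (eq_big_seq (fun x => nrm x (f0 x))) //.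
  by move=> x xK; rewrite /f1 /sec_add zK // addr0.
apply: hd; rewrite /pK big_seq big1 => [//|x xL].
rewrite /sec_sub e1 /sec_add zL // /y /sec_sub.
rewrite [A f0 x + _]addrC subrK subrr.
exact: N0 (hnrm x).
Qed.

End Op.

End Main.

Theorem lemma3p1 (R : realType) (X : countType) (x0 : X) (n : X -> nat)
  (nrm : forall x : X, 'rV[R[i]]_(n x) -> R)
  (hnrm : forall x : X, is_norm (nrm x))
  (A : sec R n -> sec R n)
  (hlin : sec_linear A)
  (hcont : sec_continuous nrm A)
  (A' : sec R n -> sec R n)
  (hA'Gc : forall phi, Gc phi -> Gc (A' phi))
  (hdual : forall phi f, Gc phi -> pairing (A' phi) f = pairing phi (A f))
  (hinj : forall phi psi, Gc phi -> Gc psi -> A' phi = A' psi -> phi = psi) :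
  forall K : {fset X}, K != fset0 ->
    exists eps : R, 0 < eps /\
      exists K' : {fset X}, K' != fset0 /\
        sec_rscale eps (U nrm K') `<=` sec_closure nrm (A @` U nrm K).
Proof.
move=> K _.
exact: (@final R X n A A' hlin hA'Gc hdual hinj nrm hnrm x0 K).
Qed.
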